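(* Let $n\geqslant 1$ and $1\leqslant i\leqslant n$. If $\sigma,\tau\in W_n$ satisfy $\sigma s_j\cdots s_nW_{n-1}=\tau s_j\cdots s_nW_{n-1}$ for all $j=i,\ldots,n+1$, then $\sigma^{-1}\tau\in W_{i-2}$. Equivalently, $W_{n-1}\cap(s_nW_{n-1}s_n)\cap\cdots\cap(s_i\cdots s_nW_{n-1}s_n\cdots s_i)=W_{i-2}$.
   Context: Standing setup: $\Gamma_1$ is an arbitrary finite Coxeter diagram with a preferred vertex $s_1$ (edge $\{s,t\}$ iff $m_{st}\geqslant3$; unlabelled edge means $m_{st}=3$, no edge means $m_{st}=2$). For $n\geqslant 2$, $\Gamma_n$ is obtained from $\Gamma_{n-1}$ by adding one new vertex $s_n$ joined by an unlabelled edge to $s_{n-1}$ and to no other vertex. $\Gamma_0$ is $\Gamma_1$ with $s_1$ deleted; $\Gamma_{-1}$ is $\Gamma_1$ with $s_1$ and all its neighbours deleted. For $n\geqslant -1$, $S_n$ is the vertex set of $\Gamma_n$ and $W_n$ the Coxeter group; $S_n=S_0\cup\{s_1,\dots,s_n\}$ and $W_m$ ($m\leqslant n$) is identified with the standard parabolic subgroup of $W_n$ generated by $S_m$. Convention: for $j=n+1$ the symbol $s_j\cdots s_nW_{n-1}$ means $W_{n-1}$. *)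

(* Defs.v *)
From Stdlib Require Import Relations.
From mathcomp Require Import all_boot all_algebra.
Set Implicit Arguments. Unset Strict Implicit. Unset Printing Implicit Defensive.

(* A Coxeter matrix on a finite vertex set V; the entry 0 encodes m_st = infinity. *)
Definition coxeter_matrix (V : finType) (m : V -> V -> nat) : Prop :=
  (forall s t, m s t = m t s) /\ (forall s, m s s = 1%N) /\
  (forall s t, s != t -> m s t != 1%N).

(* Vertices of Gamma_n for all n at once: inl v is a vertex of Gamma_1,
   inr k is the new vertex s_(k+2). *)
Definition Mext (V : finType) (m : V -> V -> nat) (s1 : V)
  (x y : (V + nat)%type) : nat :=
  match x, y with
  | inl a, inl b => m a b
  | inl a, inr 0 | inr 0, inl a => if a == s1 then 3 else 2
  | inl _, inr _ | inr _, inl _ => 2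
  | inr k, inr l => if k == l then 1 else if (k.+1 == l) || (l.+1 == k) then 3 else 2
  end.

Definition inS (V : finType) (m : V -> V -> nat) (s1 : V) (k : int)
  (x : (V + nat)%type) : bool :=
  match k with
  | Posz 0 => if x is inl v then v != s1 else false
  | Posz n.+1 => match x with inl _ => true | inr j => (j + 2 <= n.+1)%N end
  | Negz 0 => if x is inl v then (v != s1) && (m s1 v == 2%N) else false
  | Negz _ => false
  end.

Definition gen (V : finType) (s1 : V) (k : nat) : (V + nat)%type :=
  if k == 1%N then inl s1 else inr (k - 2)%N.

Definition cword (V : finType) (s1 : V) (j n : nat) : seq (V + nat)%type :=
  map (gen s1) (iota j (n.+1 - j)).

Definition cox_step (X : eqType) (M : X -> X -> nat) (P : pred X)
  (u v : seq X) : Prop :=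
  exists a b s t, [/\ P s, P t, M s t != 0%N,
    u = a ++ flatten (nseq (M s t) [:: s; t]) ++ b & v = a ++ b].

Definition cox_eq (X : eqType) (M : X -> X -> nat) (P : pred X) :
  relation (seq X) := clos_refl_sym_trans _ (cox_step M P).

Definition Weq (V : finType) (m : V -> V -> nat) (s1 : V) (n : nat) :=
  cox_eq (Mext m s1) (inS m s1 n%:Z).

Definition word_in (V : finType) (m : V -> V -> nat) (s1 : V) (k : int)
  (w : seq (V + nat)%type) : bool := all (inS m s1 k) w.

(* Main.v *)
Require Import Defs.
From Stdlib Require Import Relations ClassicalEpsilon FunctionalExtensionality.
From mathcomp Require Import all_boot all_algebra all_field ring zify.
Set Implicit Arguments. Unset Strict Implicit. Unset Printing Implicit Defensive.

Lemma m1n1 : (-1 != 1 :> algC)%R.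
Proof. rewrite -GRing.subr_eq0 -GRing.opprD GRing.oppr_eq0 -[(1 + 1)%R]/(2%:R)%R. by rewrite Num.Theory.pnatr_eq0. Qed.

Section Scalar.
Import GRing.Theory Num.Theory.
Local Open Scope ring_scope.

Lemma geom0 (l : algC) k : l ^+ k = 1 -> l != 1 -> \sum_(i < k) l ^+ i = 0.
Proof.
move=> hk h1; have := subrX1 l k; rewrite hk subrr => /esym /eqP.
by rewrite mulf_eq0 subr_eq0 (negbTE h1) => /eqP.
Qed.

Lemma SL (l u : algC) k (a : nat -> algC) : l * u = 1 -> l ^+ k = 1 -> l != 1 -> l != u ->
  (forall i, a i.+2 = (l + u) * a i.+1 - a i) -> \sum_(i < k) a i = 0.
Proof.
move=> hlu hk h1 h2 rec.
have hU : forall i, a i.+1 - l * a i = u ^+ i * (a 1 - l * a 0).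
  elim=> [|i IH]; first by rewrite expr0 mul1r.
  rewrite exprS -mulrA -IH rec.
  rewrite mulrBr mulrA (mulrC u l) hlu mul1r; ring.
have hV : forall i, a i.+1 - u * a i = l ^+ i * (a 1 - u * a 0).
  elim=> [|i IH]; first by rewrite expr0 mul1r.
  rewrite exprS -mulrA -IH rec.
  rewrite mulrBr mulrA hlu mul1r; ring.
have hA : forall i, (l - u) * a i = l ^+ i * (a 1 - u * a 0) - u ^+ i * (a 1 - l * a 0).
  by move=> i; rewrite -hU -hV; ring.
have hu1 : u ^+ k = 1.
  have e : (l * u) ^+ k = 1 by rewrite hlu expr1n.
  by rewrite exprMn hk mul1r in e.
have hu2 : u != 1.
  apply: (contra _ h1) => /eqP hu; apply/eqP.
  by rewrite -hlu hu mulr1.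
have : (l - u) * \sum_(i < k) a i = 0.
  rewrite mulr_sumr; under eq_bigr => i _ do rewrite hA.
  rewrite sumrB -!mulr_suml.
  by rewrite geom0 // geom0 // !mul0r subrr.
by move/eqP; rewrite mulf_eq0 subr_eq0 (negbTE h2) => /eqP.
Qed.

Definition zeta k : algC := sval (C_prim_root_exists (ltn0Sn (k.*2).-1)).
Lemma zetaP k : (0 < k)%N -> (k.*2).-primitive_root (zeta k).
Proof.
move=> hk; rewrite /zeta; case: (C_prim_root_exists _) => z /=.
by rewrite prednK // double_gt0.
Qed.

Definition bval k : algC :=
  if k == 0%N then -2 else if k == 1%N then 2 else if k == 2%N then 0
  else - (zeta k + (zeta k)^-1).

Lemma zeta_facts k : (2 < k)%N ->
  let z := zeta k in
  [/\ z != 0, z ^+ 2 != 1, z ^+ 4 != 1 & (z ^+ 2) ^+ k = 1].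
Proof.
move=> hk z; have hz := zetaP (ltnW (ltnW hk) : (0 < k)%N).
have hz2 : z ^+ (k.*2) = 1 by exact: prim_expr_order hz.
have hne : forall j, (0 < j < k.*2)%N -> z ^+ j != 1.
  move=> j hj; rewrite -(expr0 z) (eq_prim_root_expr hz) modn_small; last by lia.
  by rewrite mod0n; lia.
split.
- apply/eqP => z0; move: hz2; rewrite z0 expr0n.
  have -> : (k.*2 == 0)%N = false by lia.
  by move/eqP; rewrite eq_sym oner_eq0.
- by apply: hne; lia.
- by apply: hne; lia.
- by rewrite -exprM mul2n.
Qed.
End Scalar.

Section Rep.
Import GRing.Theory Num.Theory.
Variables (X : eqType) (M : X -> X -> nat) (P : pred X).
Hypothesis Msym : forall s t, M s t = M t s.
Hypothesis Mdiag : forall s, M s s = 1%N.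
Hypothesis Mne1 : forall s t, s != t -> M s t != 1%N.
Local Open Scope ring_scope.

Definition B u v := bval (M u v).
Definition T u (f : X -> algC) := fun v => f v - B u v * f u.
Definition act (w : seq X) f := foldr T f w.

Lemma Bss s : B s s = 2. Proof. by rewrite /B Mdiag. Qed.
Lemma Bsym s t : B s t = B t s. Proof. by rewrite /B Msym. Qed.

Lemma act_cat u v f : act (u ++ v) f = act u (act v f).
Proof. by rewrite /act foldr_cat. Qed.

Lemma TT s f : T s (T s f) = f.
Proof. apply: functional_extensionality => v; rewrite /T Bss; ring. Qed.

Lemma bval_nz k : k != 2%N -> k != 1%N -> bval k != 0.
Proof.
move=> h2 h1; rewrite /bval (negbTE h2) (negbTE h1).
case: ifP => [_|/negbT h0]; first by rewrite oppr_eq0 pnatr_eq0.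
have hk : (2 < k)%N by lia.
have [z0 _ z4 _] := zeta_facts hk.
rewrite oppr_eq0; apply/eqP => hz.
move: z4; set z := zeta k in z0 hz *.
have hzz : z * z^-1 = 1 by rewrite mulfV.
have z2 : z ^+ 2 = -1.
  have : z * (z + z^-1) = 0 by rewrite hz mulr0.
  rewrite mulrDr hzz => /eqP; rewrite addr_eq0 => /eqP e.
  by rewrite expr2 e.
by rewrite (_ : 4%N = (2 * 2)%N) // exprM z2 sqrrN expr1n eqxx.
Qed.

Section Braid.
Variables (s t : X).
Hypothesis hst : s != t.
Let b := B s t.
Let g f := T s (T t f).

Lemma g_eq f v : g f v = f v - B t v * f t - B s v * (f s - b * f t).
Proof. rewrite /g /T /= (Bsym t s) -/b; ring. Qed.
Lemma g_s f : g f s = - f s + b * f t.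
Proof. rewrite g_eq Bss Bsym -/b; ring. Qed.
Lemma g_t f : g f t = - b * f s + (b ^+ 2 - 1) * f t.
Proof. rewrite g_eq Bss -/b; ring. Qed.

Lemma act_altn k f : act (flatten (nseq k [:: s; t])) f = iter k g f.
Proof. by elim: k => //= k ->. Qed.

Lemma iter_g k f v : iter k g f v = f v - B t v * (\sum_(i < k) iter i g f t)
   - B s v * (\sum_(i < k) iter i g f s - b * \sum_(i < k) iter i g f t).
Proof.
elim: k => [|k IH]; first by rewrite !big_ord0 /=; ring.
rewrite iterS g_eq IH !big_ord_recr /=; ring.
Qed.

Lemma rec_s f i : iter i.+2 g f s = (b ^+ 2 - 2) * iter i.+1 g f s - iter i g f s.
Proof. rewrite !iterS (g_s (g _)) (g_t (iter i g f)) (g_s (iter i g f)); ring. Qed.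
Lemma rec_t f i : iter i.+2 g f t = (b ^+ 2 - 2) * iter i.+1 g f t - iter i g f t.
Proof. rewrite !iterS (g_t (g _)) (g_t (iter i g f)) (g_s (iter i g f)); ring. Qed.

Lemma braid f : M s t != 0%N -> iter (M s t) g f = f.
Proof.
move=> h0; have h1 := Mne1 hst.
suff [S1 S2] : \sum_(i < M s t) iter i g f s = 0 /\ \sum_(i < M s t) iter i g f t = 0.
  by apply: functional_extensionality => v; rewrite iter_g S1 S2; ring.
case: (eqVneq (M s t) 2%N) => h2.
  have b0 : b = 0 by rewrite /b /B h2.
  rewrite h2 !big_ord_recr !big_ord0 /= g_s g_t b0; split; ring.
have hk : (2 < M s t)%N by lia.
have [z0 z2 z4 zk] := zeta_facts hk.
set z := zeta (M s t) in z0 z2 z4 zk.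
have hb : b = - (z + z^-1).
  by rewrite /b /B /bval (negbTE h0) (negbTE h1) (negbTE h2).
have hzz : z * z^-1 = 1 by rewrite mulfV.
set l := z ^+ 2; set u := z^-1 ^+ 2.
have hlu : l * u = 1 by rewrite /l /u -exprMn hzz expr1n.
have hb2 : b ^+ 2 - 2 = l + u by rewrite hb sqrrN sqrrD hzz; rewrite /l /u; ring.
have hl1 : l != 1 by [].
have hlu2 : l != u.
  apply: contra z4 => /eqP e; apply/eqP.
  by rewrite (_ : 4%N = (2 * 2)%N) // exprM -/l expr2 {2}e hlu.
split.
  apply: (SL (a := fun i => iter i g f s) hlu zk hl1 hlu2) => i; rewrite -hb2.
  exact: rec_s.
apply: (SL (a := fun i => iter i g f t) hlu zk hl1 hlu2) => i; rewrite -hb2.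
exact: rec_t.
Qed.
End Braid.

Lemma act_rel s t f : M s t != 0%N -> act (flatten (nseq (M s t) [:: s; t])) f = f.
Proof.
move=> h0; case: (eqVneq s t) => [<-|hst].
  by rewrite Mdiag /= TT.
by rewrite act_altn braid.
Qed.

Lemma act_weq u v : cox_eq M P u v -> act u = act v.
Proof.
elim=> {u v} [u v [a [b [s [t [_ _ h -> ->]]]]]|//|u v _ ->//|u v w _ -> _ ->//].
apply: functional_extensionality => f.
by rewrite !act_cat act_rel.
Qed.

Section F.
Variables (J : pred X) (s : X).
Hypothesis sJ : ~~ J s.
Let d : X -> algC := fun v => if v == s then 1 else 0.

Lemma act_d z : all J z -> act z d = d.
Proof.
elim: z => //= r z IH /andP[Jr Jz]; rewrite IH //.
apply: functional_extensionality => v; rewrite /T /d.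
have -> : (r == s) = false by apply/negbTE; apply: contraNneq sJ => <-.
ring.
Qed.

Lemma F1 z : all J z -> ~ cox_eq M P z [:: s].
Proof.
move=> Jz h; have := congr1 (fun F => F d s) (act_weq h).
rewrite /= act_d // /T Bss /d eqxx => /eqP.
apply/negP; rewrite eq_sym.
have -> : (1 - 2 * 1 : algC) = -1 by ring.
exact: m1n1.
Qed.

Lemma F2 r z : J r -> M s r != 2%N -> all J z -> ~ cox_eq M P z [:: s; r; s].
Proof.
move=> Jr h2 Jz h; have := congr1 (fun F => F d s) (act_weq h).
have rs : (r == s) = false by apply/negbTE; apply: contraNneq sJ => <-.
have hb : B s r != 0.
  apply: bval_nz => //; apply: Mne1; by rewrite eq_sym rs.
rewrite /= act_d // /T /d eqxx rs !Bss (Bsym r s).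
set c := B s r in hb *; move=> e.
have E : c ^+ 2 = 1 - (1 - 2 * 1 - c * (0 - c * 1) - 2 * (1 - 2 * 1 - c * (0 - c * 1))).
  ring.
by move: hb; rewrite -sqrf_eq0 E -e subrr eqxx.
Qed.
End F.
End Rep.

Section Words.
Variables (X : eqType) (M : X -> X -> nat) (P : pred X).
Hypothesis Msym : forall s t, M s t = M t s.
Hypothesis Mdiag : forall s, M s s = 1%N.

Local Notation weq := (cox_eq M P).

Lemma weq_refl u : weq u u. Proof. exact: rst_refl. Qed.
Lemma weq_sym u v : weq u v -> weq v u. Proof. exact: rst_sym. Qed.
Lemma weq_trans u v w : weq u v -> weq v w -> weq u w. Proof. exact: rst_trans. Qed.

Lemma weq_ctx a b u v : weq u v -> weq (a ++ u ++ b) (a ++ v ++ b).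
Proof.
elim=> {u v} [u v [a0 [b0 [s [t [Ps Pt Mst -> ->]]]]]|u|u v _ IH|u v w _ IH1 _ IH2].
- apply: rst_step; exists (a ++ a0), (b0 ++ b), s, t; split=> //; by rewrite -!catA.
- exact: rst_refl.
- exact: rst_sym.
- exact: rst_trans IH2.
Qed.

Lemma weq_catl a u v : weq u v -> weq (a ++ u) (a ++ v).
Proof. by move/(weq_ctx a [::]); rewrite !cats0. Qed.
Lemma weq_catr b u v : weq u v -> weq (u ++ b) (v ++ b).
Proof. by move/(weq_ctx [::] b). Qed.
Lemma weq_cat u u' v v' : weq u u' -> weq v v' -> weq (u ++ v) (u' ++ v').
Proof. move=> h1 h2; apply: weq_trans (weq_catr _ h1) (weq_catl _ h2). Qed.

Lemma weq_rel s t : P s -> P t -> M s t != 0%N ->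
  weq (flatten (nseq (M s t) [:: s; t])) [::].
Proof. move=> Ps Pt h; apply: rst_step; exists [::], [::], s, t; split=> //; by rewrite cats0. Qed.

Lemma weq_ss s : P s -> weq [:: s; s] [::].
Proof. move=> Ps; have := weq_rel Ps Ps; rewrite Mdiag; exact. Qed.

Lemma weq_cancel a b s : P s -> weq (a ++ s :: s :: b) (a ++ b).
Proof. by move=> Ps; have := weq_ctx a b (weq_ss Ps). Qed.

Lemma weq_revK u : all P u -> weq (rev u ++ u) [::].
Proof.
elim: u => [|x u IH] /=; first by move=> _; exact: weq_refl.
case/andP=> Px Pu; rewrite rev_cons cat_rcons.
exact: weq_trans (weq_cancel _ _ Px) (IH Pu).
Qed.

Lemma weq_catrevK u : all P u -> weq (u ++ rev u) [::].
Proof. by move=> Pu; have := @weq_revK (rev u); rewrite revK all_rev; apply. Qed.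

Lemma weq_cancel_l u v : all P u -> weq (rev u ++ u ++ v) v.
Proof. by move=> Pu; have := weq_ctx [::] v (weq_revK Pu); rewrite /= catA. Qed.

Lemma weq_cancel_r u v : all P u -> weq (v ++ u ++ rev u) v.
Proof. by move=> Pu; have := weq_ctx v [::] (weq_catrevK Pu); rewrite !cats0. Qed.

Lemma weq_conj u z t : all P u ->
  weq (u ++ z ++ rev u) t <-> weq z (rev u ++ t ++ u).
Proof.
move=> Pu; have Pu' : all P (rev u) by rewrite all_rev.
split=> h.
- have H := weq_ctx (rev u) u h; apply: weq_trans H; apply: weq_sym.
  rewrite -!catA; apply: weq_trans (weq_cancel_l _ Pu) _.
  by have := weq_cancel_r z Pu'; rewrite revK.
- have H := weq_ctx u (rev u) h; apply: weq_trans H _.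
  rewrite -!catA.
  have H1 := weq_cancel_l (t ++ u ++ rev u) Pu'; rewrite revK in H1.
  apply: weq_trans H1 _.
  exact: weq_cancel_r.
Qed.

Lemma all_rel s t k : P s -> P t -> all P (flatten (nseq k [:: s; t])).
Proof. by move=> Ps Pt; elim: k => //= k ->; rewrite Ps Pt. Qed.

Lemma weq_all u v : weq u v -> all P u = all P v.
Proof.
elim=> {u v} [u v [a [b [s [t [Ps Pt _ -> ->]]]]]|//|u v _ ->//|u v w _ -> _ ->//].
by rewrite !all_cat all_rel // andbT.
Qed.

Definition weqb u v : bool := if excluded_middle_informative (weq u v) then true else false.
Lemma weqbP u v : reflect (weq u v) (weqb u v).
Proof. rewrite /weqb; case: excluded_middle_informative => h; by constructor. Qed.

Variable x0 : X.
Definition refl (w : seq X) j := take j w ++ nth x0 w j :: rev (take j w).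
Definition cnt (w t : seq X) := count (fun j => weqb (refl w j) t) (iota 0 (size w)).

Lemma cnt_weqt w t t' : weq t t' -> cnt w t = cnt w t'.
Proof.
move=> h; apply: eq_count => j; apply/idP/idP => /weqbP H; apply/weqbP.
  exact: weq_trans H h.
exact: weq_trans H (weq_sym h).
Qed.

Lemma cnt_cat u v t : all P u -> cnt (u ++ v) t = cnt u t + cnt v (rev u ++ t ++ u).
Proof.
move=> Pu; rewrite /cnt size_cat iotaD count_cat add0n; congr (_ + _).
  apply: eq_in_count => j; rewrite mem_iota add0n => /andP[_ hj].
  by rewrite /refl take_cat hj nth_cat hj.
rewrite -{1}(addn0 (size u)) iotaDl count_map; apply: eq_count => j /=.
rewrite /refl take_cat ltnNge leq_addr /= nth_cat ltnNge leq_addr /= addKn.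
rewrite rev_cat.
set y := nth x0 v j; set p := take j v.
have -> : (u ++ p) ++ y :: rev p ++ rev u = u ++ (p ++ y :: rev p) ++ rev u.
  by rewrite -!catA.
apply/idP/idP => /weqbP H; apply/weqbP; by apply/(weq_conj _ _ Pu).
Qed.

Fixpoint alt (x y : X) k := if k is k'.+1 then x :: alt y x k' else [::].

Lemma alt_flatten x y k : flatten (nseq k [:: x; y]) = alt x y k.*2.
Proof. by elim: k => //= k ->. Qed.

Lemma size_alt x y k : size (alt x y k) = k.
Proof. by elim: k x y => //= k IH x y; rewrite IH. Qed.

Lemma alt_add x y a b :
  alt x y (a + b) = alt x y a ++ (if odd a then alt y x b else alt x y b).
Proof.
elim: a x y => [|a IH] x y /=; first by [].
by rewrite IH; case: (odd a).
Qed.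

Lemma alt_even x y k b : alt x y (k.*2 + b) = alt x y k.*2 ++ alt x y b.
Proof. by rewrite alt_add odd_double. Qed.

Lemma alt_rcons x y j : alt x y j.+1 = rcons (alt x y j) (if odd j then y else x).
Proof. by rewrite -addn1 alt_add -cats1; case: (odd j). Qed.

Lemma alt_rev x y j : rev (alt x y j) = if odd j then alt x y j else alt y x j.
Proof.
elim: j x y => [|j IH] x y //.
rewrite [alt x y _]/= rev_cons IH.
case h: (odd j); rewrite [odd _.+1]/= h /=.
  by rewrite -[y :: _]/(alt y x j.+1) alt_rcons h.
by rewrite -[x :: _]/(alt x y j.+1) alt_rcons h.
Qed.

Lemma refl_alt x y L j : j < L -> refl (alt x y L) j = alt x y j.*2.+1.
Proof.
move=> hj; rewrite -(subnKC (ltnW hj)) alt_add /refl.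
rewrite take_size_cat ?size_alt // nth_cat size_alt ltnn subnn.
have -> : j.*2.+1 = j + j.+1 by rewrite -addnn addnS.
rewrite alt_add alt_rev.
case: (L - j) (subn_gt0 j L) => [|l]; first by rewrite hj.
by case: (odd j).
Qed.

Lemma refl_alt_shift x y k j : j < k ->
  refl (alt x y k.*2) (k + j) = alt x y k.*2 ++ refl (alt x y k.*2) j.
Proof.
move=> hj; rewrite refl_alt; last by rewrite -addnn ltn_add2l.
rewrite refl_alt; last by rewrite -addnn ltn_addr.
by rewrite -alt_even doubleD addnS.
Qed.

Lemma cnt_alt x y k t : weq (alt x y k.*2) [::] -> ~~ odd (cnt (alt x y k.*2) t).
Proof.
move=> hR; rewrite /cnt size_alt.
have -> : iota 0 k.*2 = iota 0 k ++ [seq k + i | i <- iota 0 k].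
  by rewrite -addnn iotaD add0n -iotaDl addn0.
rewrite count_cat count_map.
have -> : count (preim (addn k) (fun j => weqb (refl (alt x y k.*2) j) t)) (iota 0 k)
        = count (fun j => weqb (refl (alt x y k.*2) j) t) (iota 0 k).
  apply: eq_in_count => j; rewrite mem_iota add0n => /andP[_ hj] /=.
  rewrite refl_alt_shift //.
  apply/idP/idP => /weqbP H; apply/weqbP.
    by apply: weq_trans H; apply: weq_sym; exact: weq_catr hR.
  by apply: weq_trans H; exact: weq_catr hR.
by rewrite addnn odd_double.
Qed.

Lemma cnt_step u v t : cox_step M P u v -> all P u -> odd (cnt u t) = odd (cnt v t).
Proof.
case=> [a [b [s [x [Ps Px hM -> ->]]]]].
rewrite !all_cat => /andP[Pa /andP[PR _]].
rewrite (cnt_cat _ _ Pa) (cnt_cat _ _ Pa) (cnt_cat _ _ PR) alt_flatten.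
set t1 := rev a ++ t ++ a.
have hR : weq (alt s x (M s x).*2) [::] by rewrite -alt_flatten; exact: weq_rel.
have hR' : weq (rev (alt s x (M s x).*2)) [::].
  by rewrite alt_rev odd_double -alt_flatten Msym; apply: weq_rel; rewrite // -Msym.
have -> : cnt b (rev (alt s x (M s x).*2) ++ t1 ++ alt s x (M s x).*2) = cnt b t1.
  apply: cnt_weqt; apply: weq_trans (weq_catr _ hR') _ => /=.
  apply: weq_trans (weq_catl _ hR) _; rewrite cats0; exact: weq_refl.
by rewrite !oddD (negbTE (cnt_alt _ hR)).
Qed.

Lemma eta_weq u v t : weq u v -> all P u -> odd (cnt u t) = odd (cnt v t).
Proof.
elim=> {u v} [u v h|u|u v huv IH|u v w huv IH1 _ IH2] Pu.
- exact: cnt_step.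
- by [].
- by rewrite -(weq_all huv) in Pu; rewrite IH.
- by rewrite IH1 // IH2 // -(weq_all huv).
Qed.

Lemma cnt1 z t : cnt [:: z] t = weqb [:: z] t.
Proof. by rewrite /cnt /refl /= addn0. Qed.

Lemma all_tk (Q : pred X) j z : all Q z -> all Q (take j z) /\ all Q (drop j z).
Proof. by rewrite -{1}(cat_take_drop j z) all_cat => /andP. Qed.

Lemma del_refl x j : all P x -> j < size x ->
  weq (refl x j ++ x) (take j x ++ drop j.+1 x).
Proof.
move=> Px hj; rewrite /refl.
have [Pt _] := all_tk j Px.
have Pa : P (nth x0 x j) by apply: (allP Px); exact: mem_nth.
have ex : take j x ++ nth x0 x j :: drop j.+1 x = x by rewrite -drop_nth // cat_take_drop.
set a := nth x0 x j in ex Pa *; set p := take j x in ex Pt *; set d := drop j.+1 x in ex *.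
rewrite -ex -!catA /=.
apply: weq_catl.
have := weq_ctx [:: a] (a :: d) (weq_revK Pt) => /= H; rewrite -catA in H; apply: weq_trans H _.
exact: (weq_cancel [::] d Pa).
Qed.

Lemma weq_cons_cancel r u v : P r -> weq (r :: u) (r :: v) -> weq u v.
Proof.
move=> Pr h; have := weq_catl [:: r] h => /= H.
apply: weq_trans (weq_sym (weq_cancel [::] u Pr)) _.
exact: weq_trans H (weq_cancel [::] v Pr).
Qed.

Lemma weq_comm r t : P r -> P t -> M r t = 2 -> weq [:: r; t] [:: t; r].
Proof.
move=> Pr Pt h; have := weq_rel Pt Pr; rewrite Msym h => /(_ isT) /= H.
have := weq_catl [:: r; t] H; rewrite cats0 => /weq_sym H1.
apply: weq_trans H1 _.
have := weq_cancel [:: r] [:: r; t; r] Pt => /= H2; apply: weq_trans H2 _.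
exact: (weq_cancel [::] [:: t; r] Pr).
Qed.

Section GL.
Variables (J : pred X) (s : X).
Hypotheses (JP : forall r, J r -> P r) (Ps : P s)
  (F1 : forall z, all J z -> ~ weq z [:: s])
  (F2 : forall r z, J r -> M s r != 2 -> all J z -> ~ weq z [:: s; r; s]).

Lemma allJP z : all J z -> all P z.
Proof. by apply: sub_all => r; exact: JP. Qed.

Lemma refl_J z j : all J z -> j < size z -> all J (refl z j).
Proof.
move=> Jz hj; have [Jt _] := all_tk j Jz.
rewrite /refl all_cat /= all_rev Jt (allP Jz) //; exact: mem_nth.
Qed.

Lemma cnt_Js x t : all J x -> weq t [:: s] -> cnt x t = 0.
Proof.
move=> Jx ht; apply/eqP; rewrite eqn0Ngt -has_count; apply/hasPn => j.
rewrite mem_iota add0n => /andP[_ hj]; apply/negP => /weqbP H.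
apply: (F1 (refl_J Jx hj)); exact: weq_trans H ht.
Qed.

Lemma weqb_refl u : weqb u u.
Proof. apply/weqbP; exact: weq_refl. Qed.

Lemma step1 x y : all J x -> all J y -> weq (s :: x ++ [:: s]) y ->
  weq (x ++ [:: s]) (s :: x).
Proof.
move=> Jx Jy h.
have h1 : weq (s :: x) (y ++ [:: s]).
  have := weq_catr [:: s] h => /= H; apply: weq_trans _ H.
  rewrite -catA /=; have := weq_cancel (s :: x) [::] Ps; rewrite cats0 /= => H2.
  exact: weq_sym H2.
have Px : all P x := allJP Jx.
have Py : all P y := allJP Jy.
have Ps1 : all P [:: s] by rewrite /= Ps.
have e1 : cnt (s :: x) [:: s] = 1.
  rewrite -cat1s cnt_cat // cnt1 weqb_refl /= (@cnt_Js x) //.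
  exact: (weq_cancel [::] [:: s] Ps).
have e2 : cnt (y ++ [:: s]) [:: s] = weqb [:: s] (rev y ++ [:: s] ++ y).
  by rewrite cnt_cat // cnt1 (@cnt_Js y) //; exact: weq_refl.
have he := eta_weq [:: s] h1; rewrite /= Ps Px e1 e2 in he; move: (he isT).
case: weqbP => // H _.
have h2 : weq (y ++ [:: s]) (s :: y).
  move/(weq_conj _ _ Py): H => H.
  have := weq_catr y H; rewrite -!catA => H3; apply: weq_trans _ H3.
  apply: weq_sym; have : all P (rev y) by rewrite all_rev.
  move/(weq_cancel_r (y ++ [:: s])); rewrite revK -catA; exact.
have h3 : weq x y by apply: (weq_cons_cancel Ps); exact: weq_trans h1 h2.
apply: weq_trans (weq_catr _ h3) _; apply: weq_trans h2 _.
by have := weq_catl [:: s] (weq_sym h3).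
Qed.

Definition J' r := J r && (M s r == 2).

Lemma comm_J N x : size x <= N -> all J x -> weq (x ++ [:: s]) (s :: x) ->
  exists x', all J' x' /\ weq x x'.
Proof.
elim: N x => [|N IH] x hx Jx hc.
  move: hx; rewrite leqn0 => /nilP ->; exists [::]; split => //; exact: weq_refl.
case: (excluded_middle_informative (exists z, [/\ all J z, size z < size x & weq z x])).
  case=> z [Jz hz hzx].
  have hcz : weq (z ++ [:: s]) (s :: z).
    apply: weq_trans (weq_catr _ hzx) _; apply: weq_trans hc _.
    by have := weq_catl [:: s] (weq_sym hzx).
  have [|z' [J'z hzz]] := IH z _ Jz hcz; first by rewrite -ltnS (leq_trans hz hx).
  exists z'; split => //; exact: weq_trans (weq_sym hzx) hzz.
move=> hmin.
case: x hx Jx hc hmin => [|r x1] hx Jx hc hmin.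
  exists [::]; split => //; exact: weq_refl.
move: (Jx) => /= /andP[Jr Jx1].
have Pr := JP Jr.
have Px := allJP Jx.
have Px1 := allJP Jx1.
have c1 : odd (cnt (r :: x1) [:: r]).
  rewrite /cnt /= {1}/refl /= weqb_refl.
  suff -> : count (fun j => weqb (refl (r :: x1) j) [:: r]) (iota 1 (size x1)) = 0 by [].
  apply/eqP; rewrite eqn0Ngt -has_count; apply/hasPn => j; rewrite mem_iota => /andP[hj1 hj2].
  apply/negP => /weqbP H; apply: hmin.
  case: j hj1 hj2 H => // j _ hj H.
  have hj' : j.+1 < size (r :: x1) by rewrite /=; lia.
  have hd := del_refl Px hj'; rewrite /= in hd.
  set z := take j x1 ++ drop j.+1 x1 in hd *.
  have H2 : weq x1 (r :: z).
    apply: weq_trans (weq_sym (weq_cancel [::] x1 Pr)) _.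
    have := weq_catr (r :: x1) H => /= H3.
    exact: weq_trans (weq_sym H3) hd.
  exists z; split.
  - have [J1 _] := all_tk j Jx1; have [_ J2] := all_tk j.+1 Jx1; by rewrite /z all_cat J1 J2.
  - rewrite /z size_cat size_take size_drop /=; have hj2 : j < size x1 by lia.
    by rewrite hj2; lia.
  - apply: weq_sym; exact: weq_trans (weq_catl [:: r] H2) (weq_cancel [::] z Pr).
have c2 : odd (cnt (r :: x1) [:: s; r; s]).
  have PxS : all P ((r :: x1) ++ [:: s]) by rewrite all_cat Px /= Ps.
  have he := eta_weq [:: r] hc PxS.
  rewrite cnt_cat // cnt1 in he.
  have E : weqb [:: s] (rev (r :: x1) ++ [:: r] ++ r :: x1) = false.
    apply/weqbP => H; apply: (F1 (z := rev (r :: x1) ++ [:: r] ++ r :: x1)).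
      by rewrite !all_cat all_rev Jx /= Jr.
    exact: weq_sym H.
  rewrite E in he.
  have e3 : cnt (s :: r :: x1) [:: r] = weqb [:: s] [:: r] + cnt (r :: x1) [:: s; r; s].
    have := @cnt_cat [:: s] (r :: x1) [:: r]; rewrite cnt1 /= Ps; apply; exact: isT.
  have E2 : weqb [:: s] [:: r] = false.
    apply/weqbP => H; apply: (F1 (z := [:: r])); first by rewrite /= Jr.
    exact: weq_sym H.
  rewrite e3 E2 in he.
  by move: he => /=; rewrite addn0 add0n c1 => <-.
have hsr : M s r == 2.
  case: (eqVneq (M s r) 2) => // hne.
  have : 0 < cnt (r :: x1) [:: s; r; s] by move: c2; case: cnt.
  rewrite /cnt -has_count => /hasP [j]; rewrite mem_iota => /andP[_ hj] /weqbP H.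
  by case: (F2 Jr hne (refl_J Jx hj) H).
have hcx1 : weq (x1 ++ [:: s]) (s :: x1).
  apply: weq_trans (weq_sym (weq_cancel [::] (x1 ++ [:: s]) Pr)) _.
  have := weq_catl [:: r] hc => /= H; apply: weq_trans H _.
  have Mrs : M r s = 2 by rewrite Msym; exact/eqP.
  have := weq_ctx [::] (r :: x1) (weq_comm Pr Ps Mrs) => /= H2; apply: weq_trans H2 _.
  exact: (weq_cancel [:: s] x1 Pr).
have [|x1' [J'x1 hx1]] := IH x1 _ Jx1 hcx1; first by move: hx; rewrite /=.
exists (r :: x1'); split; first by rewrite /= J'x1 andbT /J' Jr hsr.
by have := weq_catl [:: r] hx1.
Qed.

Lemma GL x y : all J x -> all J y -> weq (s :: x ++ [:: s]) y ->
  exists x', all J' x' /\ weq x x'.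
Proof. move=> Jx Jy h; exact: comm_J (leqnn _) Jx (step1 Jx Jy h). Qed.
End GL.
End Words.

Section Main.
Variables (V : finType) (m : V -> V -> nat) (s1 : V).
Hypothesis hm : coxeter_matrix m.
Local Notation X := (V + nat)%type.
Local Notation M := (Mext m s1).

Lemma Msym' : forall x y : X, M x y = M y x.
Proof.
case: hm => hs _.
case=> [a|[|k]] [b|[|l]] //=; rewrite ?hs ?orbF. all: try done.
by rewrite eq_sym orbC (eq_sym l.+2).
Qed.

Lemma Mdiag' : forall x : X, M x x = 1%N.
Proof. case: hm => _ [hd _]; case=> [a|[|k]] //=; by rewrite ?hd ?eqxx. Qed.

Lemma Mne1' : forall x y : X, x != y -> M x y != 1%N.
Proof.
case: hm => _ [_ hn].
case=> [a|[|k]] [b|[|l]] //= h; rewrite ?hn //; try by case: ifP.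
case: ifP => [/eqP [e]|_]; last by case: ifP.
by rewrite e eqxx in h.
Qed.

Definition SS k (x : X) : bool :=
  match k with
  | 0 => if x is inl v then (v != s1) && (m s1 v == 2) else false
  | 1 => if x is inl v then v != s1 else false
  | k'.+2 => if x is inr j then (j + 2 <= k'.+1)%N else true
  end.

Lemma inS_SS k : inS m s1 (k%:Z - 1)%R =1 SS k.
Proof.
case: k => [|k] x; first by [].
have -> : (k.+1%:Z - 1 = k%:Z)%R by rewrite -addn1 PoszD GRing.addrK.
by case: k => [|k].
Qed.

Lemma inS_n n : inS m s1 (n%:Z)%R =1 SS n.+1.
Proof. by move=> x; rewrite -inS_SS -addn1 PoszD GRing.addrK. Qed.

Lemma SS_mono a b x : (a <= b)%N -> SS a x -> SS b x.
Proof.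
case: a => [|[|a]]; case: b => [|[|b]] //; case: x => [v|j] //=; try lia.
Qed.

Lemma gen_in k : (1 <= k)%N -> SS k.+1 (gen s1 k).
Proof. by case: k => [|[|k]] //= _; rewrite /gen /=; lia. Qed.

Lemma gen_notin k : (1 <= k)%N -> ~~ SS k (gen s1 k).
Proof. case: k => [|[|k]] //= _; first by rewrite /gen /= eqxx. rewrite /gen /=; lia. Qed.

Lemma J'_sub k r : (1 <= k)%N -> SS k r -> M (gen s1 k) r == 2 -> SS k.-1 r.
Proof.
rewrite /gen; case: k => [|[|[|k]]] //= _.
- by case: r => [v|j] //= h1 h2; rewrite h1 h2.
- case: r => [v|j] /=; first by case: ifP => // ->.
  by move=> h; exfalso; lia.
- case: r => [v|j] //= hj.
  case: ifP => // /negbT h1; case: ifP => // /negbT h2 _; lia.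
Qed.

Lemma comm_gen i l r : (1 <= i <= l)%N -> SS i.-1 r -> M (gen s1 l) r = 2.
Proof.
rewrite /gen; case: i => [|[|[|i]]] //= h.
- case: r => [v|j] //= /andP[hv /eqP hmv].
  case: ifP => _ //.
  by case: (l - 2)%N => [|k] //=; rewrite (negbTE hv).
- case: r => [v|j] //= hv.
  have -> : (l == 1)%N = false by lia.
  by case: (l - 2)%N => [|k] //=; rewrite (negbTE hv).
- have -> : (l == 1)%N = false by lia.
  case: r => [v|j] //= hj.
    by case E: (l - 2)%N => [|k] //; lia.
  case E: (l - 2)%N => [|k]; first lia.
  case: ifP => [/eqP|_]; first lia.
  case: ifP => //; lia.
Qed.

Variables (n : nat).
Hypothesis hn : (1 <= n)%N.
Local Notation P := (inS m s1 (n%:Z)%R).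
Local Notation weq := (cox_eq M P).
Definition W k y := exists w, all (SS k) w /\ weq y w.

Lemma SSP k x : (k <= n.+1)%N -> SS k x -> P x.
Proof. by move=> hk h; rewrite inS_n; exact: SS_mono hk h. Qed.

Lemma allSSP k w : (k <= n.+1)%N -> all (SS k) w -> all P w.
Proof. by move=> hk; apply: sub_all => x; exact: SSP. Qed.

Lemma genP l : (1 <= l <= n)%N -> P (gen s1 l).
Proof. by case/andP=> h1 h2; apply: (@SSP l.+1) => //; exact: gen_in. Qed.

Lemma cword_nil : cword s1 n.+1 n = [::].
Proof. by rewrite /cword subnn. Qed.

Lemma cword_cons j : (j <= n)%N -> cword s1 j n = gen s1 j :: cword s1 j.+1 n.
Proof. by move=> hj; rewrite /cword subSn // subSS. Qed.

Lemma cwordP j : (1 <= j)%N -> all P (cword s1 j n).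
Proof.
move=> hj; rewrite /cword all_map; apply/allP => l; rewrite mem_iota => /andP[h1 h2] /=.
apply: genP; apply/andP; split; lia.
Qed.


Lemma wcancel a b s : P s -> weq (a ++ s :: s :: b) (a ++ b).
Proof. exact: (@weq_cancel _ _ _ Mdiag' a b s). Qed.

Lemma GLk k y : (1 <= k <= n)%N -> W k y -> W k (gen s1 k :: y ++ [:: gen s1 k]) -> W k.-1 y.
Proof.
move=> hk [w [Jw hyw]] [w2 [Jw2 h2]].
have hk1 : (1 <= k)%N by case/andP: hk.
have JP : forall r, SS k r -> P r by move=> r; apply: SSP; case/andP: hk => _ h; lia.
have Ps := genP hk.
have F1' := @F1 _ _ P Msym' Mdiag' Mne1' (SS k) (gen s1 k) (gen_notin hk1).
have F2' := @F2 _ _ P Msym' Mdiag' Mne1' (SS k) (gen s1 k) (gen_notin hk1).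
have h3 : weq (gen s1 k :: w ++ [:: gen s1 k]) w2.
  apply: weq_trans h2; have := weq_ctx [:: gen s1 k] [:: gen s1 k] (weq_sym hyw); exact.
have [x' [J'x hx]] := GL Msym' Mdiag' (inl s1) JP Ps F1' F2' Jw Jw2 h3.
exists x'; split; last exact: weq_trans hyw hx.
apply/allP => r /(allP J'x) /andP[h1 h2']; exact: J'_sub.
Qed.

Lemma Qlem d : forall j y, (j + d = n.+1)%N -> (1 <= j)%N -> W j y ->
  W n (rev (cword s1 j n) ++ y ++ cword s1 j n) -> W j.-1 y.
Proof.
elim: d => [|d IH] j y hjd hj hy hc.
  move: hjd; rewrite addn0 => hjn; subst j.
  by move: hc; rewrite cword_nil /= cats0.
have hjn : (j <= n)%N by lia.
move: hc; rewrite cword_cons //.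
set g := gen s1 j; set c := cword s1 j.+1 n.
have -> : rev (g :: c) ++ y ++ g :: c = rev c ++ (g :: y ++ [:: g]) ++ c.
  by rewrite rev_cons -cats1 /= -!catA.
move=> hc.
have hz : W j.+1 (g :: y ++ [:: g]).
  case: hy => w [Jw hyw]; exists (g :: w ++ [:: g]); split.
    have Sg : SS j.+1 g by exact: gen_in.
    apply/allP => x; rewrite inE mem_cat inE => /orP[/eqP->//|/orP[hx|/eqP->//]].
    by apply: (@SS_mono j) => //; exact: (allP Jw).
  by have := weq_ctx [:: g] [:: g] hyw.
have hjd' : (j.+1 + d = n.+1)%N by rewrite addSnnS.
have hz' := IH j.+1 _ hjd' (leqW hj) hz hc.
by apply: GLk => //; rewrite hj hjn.
Qed.

Lemma fwd i x : (1 <= i <= n)%N -> all P x ->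
  (forall j, (i <= j <= n.+1)%N -> exists w, all (SS n) w /\
     weq x (cword s1 j n ++ w ++ rev (cword s1 j n))) -> W i.-1 x.
Proof.
move=> hi Px hc.
have hc' : forall j, (i <= j <= n.+1)%N -> W n (rev (cword s1 j n) ++ x ++ cword s1 j n).
  move=> j hj; have [w [Jw h]] := hc j hj; exists w; split => //.
  set c := cword s1 j n.
  have Pc : all P c by apply: cwordP; lia.
  have Pc' : all P (rev c) by rewrite all_rev.
  apply: weq_trans (weq_ctx (rev c) c h) _.
  rewrite -!catA; apply: weq_trans (@weq_cancel_l _ _ _ Mdiag' c (w ++ rev c ++ c) Pc) _.
  by have := @weq_cancel_r _ _ _ Mdiag' (rev c) w Pc'; rewrite revK.
have key : forall d, (d <= n.+1 - i)%N -> W (n - d) x.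
  elim=> [|d IH] hd.
    have : (i <= n.+1 <= n.+1)%N by apply/andP; split; lia.
    by move/hc'; rewrite cword_nil /= cats0 subn0.
  have hd' : (d <= n.+1 - i)%N by lia.
  have h1 : (n - d + d.+1 = n.+1)%N by lia.
  have h2 : (1 <= n - d)%N by lia.
  have h3 : (i <= n - d <= n.+1)%N by apply/andP; split; lia.
  have := Qlem h1 h2 (IH hd') (hc' _ h3).
  by rewrite subnS.
have := key (n.+1 - i) (leqnn _).
by have -> : (n - (n.+1 - i) = i.-1)%N by lia.
Qed.

Lemma comm1 g w : P g -> all P w -> all (fun r => M g r == 2) w ->
  weq (g :: w) (w ++ [:: g]).
Proof.
move=> Pg; elim: w => [|r w IH] /=; first by move=> _ _; exact: weq_refl.
case/andP=> Pr Pw /andP[/eqP hr hw].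
have := weq_ctx [::] w (weq_comm Msym' Mdiag' Pg Pr hr) => /= H.
apply: weq_trans H _.
by have := weq_catl [:: r] (IH Pw hw).
Qed.

Lemma commc c w : all P c -> all P w ->
  (forall g, g \in c -> all (fun r => M g r == 2) w) -> weq (c ++ w) (w ++ c).
Proof.
move=> + Pw; elim: c => [|g c IH] /=; first by rewrite cats0; move=> _ _; exact: weq_refl.
case/andP=> Pg Pc hc.
have H1 : weq (g :: c ++ w) (g :: w ++ c).
  have hc' : forall g', g' \in c -> all (fun r => M g' r == 2) w.
    by move=> g' hg'; apply: hc; rewrite inE hg' orbT.
  have := weq_catl [:: g] (IH Pc hc'); exact.
apply: weq_trans H1 _.
have := weq_catr c (comm1 Pg Pw (hc g (mem_head _ _))).
by rewrite -catA.
Qed.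

Lemma bwd i x : (1 <= i <= n)%N -> W i.-1 x ->
  forall j, (i <= j <= n.+1)%N -> exists w, all (SS n) w /\
     weq x (cword s1 j n ++ w ++ rev (cword s1 j n)).
Proof.
move=> hi [w [Jw hxw]] j hj.
exists w; split.
  by apply: sub_all Jw => r; apply: SS_mono; lia.
set c := cword s1 j n.
have Pc : all P c by apply: cwordP; lia.
have Pw : all P w by apply: (allSSP (k := i.-1)) => //; lia.
have hcw : weq (c ++ w) (w ++ c).
  apply: commc => // g; rewrite /c /cword => /mapP[l]; rewrite mem_iota => /andP[hl1 hl2] ->.
  apply/allP => r /(allP Jw) hr; apply/eqP; apply: (comm_gen (i := i)) => //; lia.
apply: weq_trans hxw _.
apply: weq_trans (weq_sym (@weq_cancel_r _ _ _ Mdiag' c w Pc)) _.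
have := weq_catr (rev c) (weq_sym hcw); rewrite -!catA; exact.
Qed.
End Main.

Theorem proposition3p3 (V : finType) (m : V -> V -> nat) (s1 : V)
  (hm : coxeter_matrix m) (n i : nat) (hn : (1 <= n)%N)
  (hi1 : (1 <= i)%N) (hin : (i <= n)%N) :
  (forall sigma tau : seq (V + nat)%type,
     word_in m s1 n%:Z sigma -> word_in m s1 n%:Z tau ->
     (forall j, (i <= j <= n.+1)%N ->
        exists w, word_in m s1 (n%:Z - 1) w /\
          Weq m s1 n (sigma ++ cword s1 j n) (tau ++ cword s1 j n ++ w)) ->
     exists w, word_in m s1 (i%:Z - 2) w /\ Weq m s1 n (rev sigma ++ tau) w)
  /\
  (forall x : seq (V + nat)%type, word_in m s1 n%:Z x ->
     ((forall j, (i <= j <= n.+1)%N ->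
        exists w, word_in m s1 (n%:Z - 1) w /\
          Weq m s1 n x (cword s1 j n ++ w ++ rev (cword s1 j n)))
      <-> exists w, word_in m s1 (i%:Z - 2) w /\ Weq m s1 n x w)).
Proof.
have hi : (1 <= i <= n)%N by rewrite hi1 hin.
have En : forall w, word_in m s1 (n%:Z - 1) w = all (SS m s1 n) w.
  by move=> w; rewrite /word_in (eq_all (inS_SS m s1 n)).
have Ei : forall w, word_in m s1 (i%:Z - 2) w = all (SS m s1 i.-1) w.
  move=> w; rewrite /word_in -(eq_all (inS_SS m s1 i.-1)).
  by case: i hi1 {hi hin} => // k _; rewrite -addn1 PoszD -GRing.addrA.
have part2 : forall x : seq (V + nat)%type, word_in m s1 n%:Z x ->
     ((forall j, (i <= j <= n.+1)%N ->
        exists w, word_in m s1 (n%:Z - 1) w /\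
          Weq m s1 n x (cword s1 j n ++ w ++ rev (cword s1 j n)))
      <-> exists w, word_in m s1 (i%:Z - 2) w /\ Weq m s1 n x w).
  move=> x Px; split.
  - move=> hc; have [|w [Jw hw]] := fwd hm hn hi Px.
      move=> j hj; have [w [Jw hw]] := hc j hj; exists w; split => //; by rewrite -En.
    by exists w; rewrite Ei.
  - case=> w [Jw hw] j hj.
    have hW : W m s1 n i.-1 x by exists w; rewrite -Ei.
    have [w' [Jw' hw']] := bwd hm hn hi hW hj.
    by exists w'; rewrite En.
split => //.
move=> sigma tau Ps Pt hst.
have Px : word_in m s1 n%:Z (rev sigma ++ tau) by rewrite /word_in all_cat all_rev; apply/andP; split.
apply/(part2 _ Px) => j hj.
have [w0 [Jw0 h]] := hst j hj.
exists (rev w0); split; first by rewrite /word_in all_rev.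
rewrite /Weq in h *.
set c := cword s1 j n.
have Pc : all (inS m s1 n%:Z) c by apply: cwordP; case/andP: hj => h1 _; lia.
have Pw0 : all (inS m s1 n%:Z) w0 by apply: (@allSSP _ m s1 n n) => //; rewrite -En.
have e1 : cox_eq (Mext m s1) (inS m s1 n%:Z) c ((rev sigma ++ tau) ++ c ++ w0).
  have h1 := weq_catl (rev sigma) h.
  apply: weq_trans (weq_sym (@weq_cancel_l _ _ _ (Mdiag' s1 hm) sigma c Ps)) _.
  by rewrite -catA.
have e2 : cox_eq (Mext m s1) (inS m s1 n%:Z) (c ++ rev w0) ((rev sigma ++ tau) ++ c).
  apply: weq_trans (weq_catr (rev w0) e1) _.
  rewrite -!catA catA.
  have := @weq_cancel_r _ _ _ (Mdiag' s1 hm) w0 ((rev sigma ++ tau) ++ c) Pw0.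
  by rewrite -!catA.
apply: weq_sym; have := weq_catr (rev c) e2; rewrite -!catA => H; apply: weq_trans H _.
have := @weq_cancel_r _ _ _ (Mdiag' s1 hm) c (rev sigma ++ tau) Pc.
by rewrite -!catA.
Qed.
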